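(* Let $m,n\ge 1$ and let $F\subseteq\{1,\dots,m\}\times\{1,\dots,n\}$ be a binary image with row sums $\mathcal R=(r_1,\dots,r_m)$ and column sums $\mathcal C=(c_1,\dots,c_n)$, where $r_1=n$ and $r_m=0$. Let $L_h$ be the length of the horizontal boundary of $F$. Define $b_i=\#\{j: c_j\ge i\}$ and $d_i=b_i-r_i$ for $i=1,\dots,m$. Then for every integer $t\ge 0$ and every choice of indices $1\le i_1<i_2<\dots<i_{2t+1}\le m$, \[ L_h\ \ge\ 2n+d_{i_1}-d_{i_2}+d_{i_3}-\cdots-d_{i_{2t}}+2d_{i_{2t+1}}, \] \[ L_h\ \ge\ 2n-d_{i_{2t+1}}+d_{i_{2t}}-d_{i_{2t-1}}+\cdots+d_{i_2}-2d_{i_1}. \]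
   Context: A binary image is a finite set $F\subseteq\mathbb Z^2$; point $(i,j)$ lies in row $i$ and column $j$ (row indices increase downwards, column indices to the right). The row sum $r_i$ is the number of points of $F$ in row $i$, and the column sum $c_j$ is the number of points of $F$ in column $j$. The horizontal boundary of $F$ is the set of ordered pairs of points $((i,j),(i',j))$ of $\mathbb Z^2$ with $|i-i'|=1$, $(i,j)\in F$ and $(i',j)\notin F$ (so pieces above the top cell or below the bottom cell of a column also count); its length is the number of such pairs. *)

(* Defs.v *)
From HB Require Import structures.
From mathcomp Require Import all_boot all_order all_algebra.
Set Implicit Arguments. Unset Strict Implicit. Unset Printing Implicit Defensive.
Import Order.TTheory GRing.Theory Num.Theory.

(* A binary image inside the m x n grid: rows 'I_m, columns 'I_n
   (0-based: row k here is row k+1 of the paper). *)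

Definition rowsum m n (F : {set 'I_m * 'I_n}) (i : 'I_m) : nat :=
  #|[set j : 'I_n | (i, j) \in F]|.

Definition colsum m n (F : {set 'I_m * 'I_n}) (j : 'I_n) : nat :=
  #|[set i : 'I_m | (i, j) \in F]|.

Definition inZ2 m n (F : {set 'I_m * 'I_n}) (i j : int) : bool :=
  [exists p in F, ((Posz (nat_of_ord p.1)) == i) && ((Posz (nat_of_ord p.2)) == j)].

Definition hboundary m n (F : {set 'I_m * 'I_n}) : nat :=
  \sum_(p in F)
     ((~~ inZ2 F ((Posz (nat_of_ord p.1)) - 1)%R (Posz (nat_of_ord p.2)) : nat)
      + (~~ inZ2 F ((Posz (nat_of_ord p.1)) + 1)%R (Posz (nat_of_ord p.2)) : nat)).

(* b_{k+1} = #{ j : c_j >= k+1 } for 0-based row index k *)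
Definition bseq m n (F : {set 'I_m * 'I_n}) (k : 'I_m) : nat :=
  #|[set j : 'I_n | k < colsum F j]|.

Definition dseq m n (F : {set 'I_m * 'I_n}) (k : 'I_m) : int :=
  ((Posz (bseq F k)) - (Posz (rowsum F k)))%R.

(* Main.v *)
Require Import Defs.
From mathcomp Require Import all_boot all_order all_algebra.
Set Implicit Arguments. Unset Strict Implicit. Unset Printing Implicit Defensive.
Import Order.TTheory GRing.Theory Num.Theory.
Import Order.TTheory GRing.Theory Num.Theory.

Module Helpers.
Local Open Scope ring_scope.
Lemma sub_split (a b c : int) : a - c = (a - b) + (b - c).
Proof. by rewrite addrA addrNK. Qed.

Lemma aux1 (D : int) (ga gb ha hb : bool) : (hb ==> ha) -> Posz ga - Posz gb <= D ->
  (Posz hb - Posz gb) - (Posz ha - Posz ga) <= D.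
Proof. by case: ga; case: gb; case: ha; case: hb => //= _ H; apply: le_trans H. Qed.

Lemma aux2 (D : int) (gs hs : bool) : Posz true - Posz gs <= D -> Posz hs - Posz gs <= D.
Proof. by case: gs; case: hs => //= H; apply: le_trans H. Qed.

Lemma aux5 (D : int) (gs hs : bool) : Posz gs - Posz false <= D -> - (Posz hs - Posz gs) <= D.
Proof. by case: gs; case: hs => //= H; apply: le_trans H. Qed.

Lemma Dnn (d : nat) : (0 : int) <= Posz d.
Proof. by []. Qed.

Lemma two (y : int) : 2 * y = y + y.
Proof. by rewrite mulr_natl mulr2n. Qed.

Lemma sgn_even t : (-1) ^+ (2 * t)%N = 1 :> int.
Proof. by rewrite -signr_odd oddM. Qed.
Lemma sgn_odd t : (-1) ^+ (2 * t).+1 = -1 :> int.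
Proof. by rewrite -signr_odd /= oddM. Qed.

Lemma e2 t : (2 * t.+1 = (2 * t).+2)%N.
Proof. by rewrite mulnS. Qed.

Lemma lin2 (P x0 a b c D1 D2 D3 : int) : - (2 * x0) + P + a <= D1 -> b - a <= D2 -> 0 <= D3 ->
  - (2 * x0) + (P + b - c) + c <= D1 + (D2 + D3).
Proof.
move=> h1 h2 h3; rewrite addrA addrNK addrA.
have -> : - (2 * x0) + P + b = (- (2 * x0) + P + a) + (b - a) by rewrite -[RHS]addrA subrKC.
apply: lerD h1 _; apply: le_trans h2 _; by rewrite lerDl.
Qed.

Lemma linA (S T D a : int) : S + T <= D -> 1 <= a -> 2 + S + T <= 1 + a + D.
Proof.
move=> h1 h2; rewrite -addrA; have -> : (2 : int) = 1 + 1 by [].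
by apply: lerD => //; apply: lerD.
Qed.

Lemma linB (S T D a : int) : S = 0 -> T = 0 -> a = 0 -> 1 <= D -> 2 + S + T <= 1 + a + D.
Proof.
move=> -> -> -> h; rewrite !addr0; have -> : (2 : int) = 1 + 1 by [].
by apply: lerD.
Qed.

Section Col.
Variables (m : nat) (g : nat -> bool).
Hypothesis g0 : g 0.
Hypothesis gout : forall i, (m <= i)%N -> g i = false.

Definition desc k := g k && ~~ g k.+1.
Definition asc k := ~~ g k && g k.+1.
Definition Dd a b := (\sum_(a <= k < b) (desc k : nat))%N.
Definition Aa a b := (\sum_(a <= k < b) (asc k : nat))%N.

Lemma D_tele a b : (a <= b)%N -> Posz (g a) - Posz (g b) <= Posz (Dd a b).
Proof.
elim: b => [|b IH]; first by rewrite leqn0 => /eqP ->; rewrite subrr.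
rewrite leq_eqVlt => /orP [/eqP <-|]; first by rewrite subrr.
rewrite ltnS => ab; rewrite /Dd big_nat_recr //= PoszD.
have -> : Posz (g a) - Posz (g b.+1) = (Posz (g a) - Posz (g b)) + (Posz (g b) - Posz (g b.+1)).
  exact: sub_split.
apply: lerD; first exact: IH.
by rewrite /desc; case: (g b); case: (g b.+1).
Qed.

Lemma A_tele a b : (a <= b)%N -> Posz (g b) - Posz (g a) <= Posz (Aa a b).
Proof.
elim: b => [|b IH]; first by rewrite leqn0 => /eqP ->; rewrite subrr.
rewrite leq_eqVlt => /orP [/eqP <-|]; first by rewrite subrr.
rewrite ltnS => ab; rewrite /Aa big_nat_recr //= PoszD.
have -> : Posz (g b.+1) - Posz (g a) = (Posz (g b) - Posz (g a)) + (Posz (g b.+1) - Posz (g b)).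
  by rewrite [RHS]addrC -sub_split.
apply: lerD; first exact: IH.
by rewrite /asc; case: (g b); case: (g b.+1).
Qed.

Lemma D_add a b c : (a <= b)%N -> (b <= c)%N -> Dd a c = (Dd a b + Dd b c)%N.
Proof. by move=> ab bc; rewrite /Dd -big_cat_nat. Qed.
Lemma A_add a b c : (a <= b)%N -> (b <= c)%N -> Aa a c = (Aa a b + Aa b c)%N.
Proof. by move=> ab bc; rewrite /Aa -big_cat_nat. Qed.

Definition cc := (\sum_(0 <= i < m) g i)%N.
Definition x i : int := Posz (i < cc) - Posz (g i).
Arguments x : simpl never.

Lemma g_lt i : g i -> (i < m)%N.
Proof. by move=> gi; rewrite ltnNge; apply/negP => /gout; rewrite gi. Qed.

Lemma sum_b_le (h : nat -> bool) a b : (\sum_(a <= k < b) (h k : nat) <= b - a)%N.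
Proof.
rewrite -[X in (_ <= X)%N]muln1 -sum_nat_const_nat; apply: leq_sum => k _; exact: leq_b1.
Qed.

Lemma hole i : (i < cc)%N -> g i = false -> exists j, [/\ (i < j)%N, (j < m)%N & g j].
Proof.
move=> ic gi.
case: (boolP [exists j : 'I_m, (i < j)%N && g j]) => [/existsP [j /andP[ij gj]] | /existsPn H].
  by exists j.
exfalso; move: ic; apply/negP; rewrite -leqNgt.
case: (leqP m i) => im.
  by rewrite /cc; apply: leq_trans (sum_b_le _ _ _) _; rewrite subn0.
rewrite /cc (big_cat_nat (leq0n i) (ltnW im)) /=.
have -> : (\sum_(i <= k < m) (g k : nat) = 0)%N.
  rewrite big_nat_cond big1 // => k /andP[/andP[ik km] _].
  rewrite leq_eqVlt in ik; case/orP: ik => [/eqP <-|ik]; first by rewrite gi.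
  by move: (H (Ordinal km)) => /=; rewrite ik /= => /negbTE ->.
by rewrite addn0; apply: leq_trans (sum_b_le _ _ _) _; rewrite subn0.
Qed.

Lemma excess i : g i -> (cc <= i)%N -> exists j, (j < i)%N /\ g j = false.
Proof.
move=> gi ci.
case: (boolP [exists j : 'I_i, ~~ g j]) => [/existsP [j gj] | /existsPn H].
  by exists j; split; [exact: ltn_ord | exact: negbTE].
exfalso; move: ci; apply/negP; rewrite -ltnNge.
have im := g_lt gi.
rewrite /cc (big_cat_nat (leq0n i.+1) im) /=.
apply: leq_trans (leq_addr _ _).
rewrite big_nat_cond (eq_bigr (fun _ => 1%N)) ?sum_nat_const_nat ?subn0 ?muln1 //.
  rewrite -big_nat_cond sum_nat_const_nat subn0 muln1 //.
move=> k /andP[/andP[_ ki] _].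
rewrite ltnS leq_eqVlt in ki; case/orP: ki => [/eqP ->|ki]; first by rewrite gi.
by move: (H (Ordinal ki)) => /= /negPn ->.
Qed.


Lemma step_pair a b : (a <= b)%N -> x b - x a <= Posz (Dd a b).
Proof.
move=> ab; apply: aux1; last exact: D_tele.
by apply/implyP => bc; apply: leq_ltn_trans bc.
Qed.

Lemma step_first s : x s <= Posz (Dd 0 s).
Proof. by apply: aux2; rewrite -g0; apply: D_tele. Qed.

Lemma step_firstN s : - x s <= Posz (Dd 0 s).
Proof.
rewrite /x; case gs: (g s); last by case: (s < cc)%N.
case: (ltnP s cc) => sc //.
have [j [js gj]] := excess gs sc.
rewrite (D_add (leq0n j) (ltnW js)) PoszD.
apply: (@le_trans _ _ (Posz (Dd 0 j))); last by rewrite lerDl.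
apply: le_trans (D_tele (leq0n j)); by rewrite gj g0.
Qed.

Lemma step_last s : (s <= m)%N -> x s <= Posz (Dd s m).
Proof.
move=> sm; rewrite /x; case gs: (g s); first by case: (s < cc)%N.
case: (ltnP s cc) => sc //.
have [j [sj jm gj]] := hole sc gs.
rewrite (D_add (ltnW sj) (ltnW jm)) PoszD.
apply: (@le_trans _ _ (Posz (Dd j m))); last by rewrite lerDr.
apply: le_trans (D_tele (ltnW jm)); by rewrite gj gout.
Qed.

Lemma step_lastN s : (s <= m)%N -> - x s <= Posz (Dd s m).
Proof. by move=> sm; apply: aux5; rewrite -(gout (leqnn m)); apply: D_tele. Qed.

Lemma P3 i : Aa 0 m = 0%N -> x i = 0.
Proof.
move=> A0; rewrite /x; case gi: (g i); case: (ltnP i cc) => ic //; exfalso.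
  have [j [ji gj]] := excess gi ic.
  have im := g_lt gi.
  have : (Aa j i <= Aa 0 m)%N.
    rewrite (A_add (leq0n j) (ltnW (ltn_trans ji im))) (A_add (ltnW ji) (ltnW im)).
    exact: leq_trans (leq_addr _ _) (leq_addl _ _).
  rewrite A0 leqn0 => /eqP h.
  by have := A_tele (ltnW ji); rewrite h gj gi.
have [j [ij jm gj]] := hole ic gi.
have : (Aa i j <= Aa 0 m)%N.
  rewrite (A_add (leq0n i) (ltnW (ltn_trans ij jm))) (A_add (ltnW ij) (ltnW jm)).
  exact: leq_trans (leq_addr _ _) (leq_addl _ _).
rewrite A0 leqn0 => /eqP h.
by have := A_tele (ltnW ij); rewrite h gj gi.
Qed.

Lemma chain1_pre t (s : nat -> nat) : (forall k, (k < 2 * t)%N -> (s k < s k.+1)%N) ->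
  \sum_(k < 2 * t) (-1) ^+ k * x (s k) + x (s (2 * t)%N) <= Posz (Dd 0 (s (2 * t)%N)).
Proof.
elim: t => [|t IH] Hs.
  by rewrite big_ord0 add0r; apply: step_first.
have hlt : (2 * t < 2 * t.+1)%N by rewrite e2 ltnS leqnSn.
have IH' := IH (fun k kt => Hs k (ltn_trans kt hlt)).
rewrite e2 !big_ord_recr /= sgn_even sgn_odd mul1r mulN1r.
have h1 : (s (2 * t) <= s (2 * t).+1)%N.
  by apply: ltnW; apply: Hs; rewrite e2 ltnS leqnSn.
have h2 : (s (2 * t).+1 <= s (2 * t).+2)%N.
  by apply: ltnW; apply: Hs; rewrite e2.
rewrite (D_add (leq0n _) (leq_trans h1 h2)) (D_add h1 h2) !PoszD.
rewrite -[X in X <= _]addrA [- _ + _]addrC; apply: lerD IH' _.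
by apply: le_trans (step_pair h2) _; rewrite lerDr.
Qed.

Lemma chain1 t (s : nat -> nat) : (forall k, (k < 2 * t)%N -> (s k < s k.+1)%N) ->
  (s (2 * t) <= m)%N ->
  \sum_(k < 2 * t) (-1) ^+ k * x (s k) + 2 * x (s (2 * t)%N) <= Posz (Dd 0 m).
Proof.
move=> Hs sm; rewrite two addrA (D_add (leq0n _) sm) PoszD.
by apply: lerD; [exact: chain1_pre | exact: step_last].
Qed.

Lemma chain2_pre t (s : nat -> nat) : (forall k, (k < 2 * t)%N -> (s k < s k.+1)%N) ->
  - (2 * x (s 0)) + \sum_(k < 2 * t) (-1) ^+ k * x (s k.+1) + x (s (2 * t)%N)
    <= Posz (Dd 0 (s (2 * t)%N)).
Proof.
elim: t => [|t IH] Hs.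
  by rewrite big_ord0 addr0 two opprD addrNK; apply: step_firstN.
have hlt : (2 * t < 2 * t.+1)%N by rewrite e2 ltnS leqnSn.
have IH' := IH (fun k kt => Hs k (ltn_trans kt hlt)).
rewrite e2 !big_ord_recr /= sgn_even sgn_odd mul1r mulN1r.
have h1 : (s (2 * t) <= s (2 * t).+1)%N.
  by apply: ltnW; apply: Hs; rewrite e2 ltnS leqnSn.
have h2 : (s (2 * t).+1 <= s (2 * t).+2)%N.
  by apply: ltnW; apply: Hs; rewrite e2.
rewrite (D_add (leq0n _) (leq_trans h1 h2)) (D_add h1 h2) !PoszD.
apply: lin2; [exact: IH' | exact: step_pair h1 | exact: Dnn].
Qed.

Lemma chain2 t (s : nat -> nat) : (forall k, (k < 2 * t)%N -> (s k < s k.+1)%N) ->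
  (s (2 * t) <= m)%N ->
  - (2 * x (s 0)) + \sum_(k < 2 * t) (-1) ^+ k * x (s k.+1) <= Posz (Dd 0 m).
Proof.
move=> Hs sm; rewrite -[X in X <= _](addrK (x (s (2 * t)%N))) (D_add (leq0n _) sm) PoszD.
by apply: lerD; [exact: chain2_pre | exact: step_lastN].
Qed.

Definition bd := (\sum_(i < m) (g i * ((nat_of_ord i == 0%N) || ~~ g i.-1) + g i * ~~ g i.+1))%N.

Lemma bd_eq : bd = (1 + Aa 0 m + Dd 0 m)%N.
Proof.
rewrite /bd /Dd /Aa; have := g_lt g0; case: m gout => [//|m'] gout' _.
rewrite big_split /= !big_mkord [in LHS]big_ord_recl [in RHS]big_ord_recr /=.
rewrite g0 {2}/asc (gout' m'.+1) // andbF addn0.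
congr (_ + _)%N; first congr (_ + _)%N.
  by apply: eq_bigr => i _; rewrite /asc /bump /= add0n mulnb andbC.
by apply: eq_bigr => i _; rewrite /desc mulnb.
Qed.

Lemma D_pos : (0 < Dd 0 m)%N.
Proof. by have := D_tele (leq0n m); rewrite g0 gout. Qed.

Lemma col1 t (s : nat -> nat) : (forall k, (k < 2 * t)%N -> (s k < s k.+1)%N) ->
  (s (2 * t) <= m)%N ->
  2 + \sum_(k < 2 * t) (-1) ^+ k * x (s k) + 2 * x (s (2 * t)%N) <= Posz bd.
Proof.
move=> Hs sm; rewrite bd_eq !PoszD.
case: (posnP (Aa 0 m)) => A0.
  apply: linB; last by have := D_pos.
  - by apply: big1 => k _; rewrite P3 // mulr0.
  - by rewrite P3 // mulr0.
  - by rewrite A0.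
by apply: linA => //; exact: chain1.
Qed.

Lemma col2 t (s : nat -> nat) : (forall k, (k < 2 * t)%N -> (s k < s k.+1)%N) ->
  (s (2 * t) <= m)%N ->
  2 - 2 * x (s 0) + \sum_(k < 2 * t) (-1) ^+ k * x (s k.+1) <= Posz bd.
Proof.
move=> Hs sm; rewrite bd_eq !PoszD.
case: (posnP (Aa 0 m)) => A0.
  apply: linB; last by have := D_pos.
  - by rewrite P3 // mulr0 oppr0.
  - by apply: big1 => k _; rewrite P3 // mulr0.
  - by rewrite A0.
by apply: linA => //; exact: chain2.
Qed.

End Col.

Section Main.
Variables (m n : nat) (F : {set 'I_m * 'I_n}).

Definition gc (j : 'I_n) (i : nat) : bool := inZ2 F (Posz i) (Posz j).

Lemma inZ2_ord (i : 'I_m) (j : 'I_n) : inZ2 F (Posz i) (Posz j) = ((i, j) \in F).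
Proof.
apply/existsP/idP => [[[a b] /andP[pF /andP[/= e1 e2]]]|ijF].
  rewrite eqz_nat in e1; rewrite eqz_nat in e2.
  have -> : i = a by apply: val_inj; rewrite /= (eqP e1).
  have -> : j = b by apply: val_inj; rewrite /= (eqP e2).
  exact: pF.
by exists (i, j); rewrite ijF /= !eqxx.
Qed.

Lemma gc_out j i : (m <= i)%N -> gc j i = false.
Proof.
move=> mi; apply/existsP => [[[a b] /andP[_ /andP[/= e1 _]]]].
rewrite eqz_nat in e1; move: (ltn_ord a); rewrite (eqP e1) ltnNge mi.
by [].
Qed.

Lemma inZ2_neg j : inZ2 F (-1)%R (Posz j) = false.
Proof. by apply/existsP => [[[a b] /andP[_ /andP[/= e1 _]]]]. Qed.

Lemma card_sum (T : finType) (P : pred T) : #|[set x | P x]| = (\sum_(x : T) (P x : nat))%N.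
Proof.
rewrite -sum1_card big_mkcond /=; apply: eq_bigr => x _; rewrite inE.
by case: (P x).
Qed.

Lemma colsum_cc j : colsum F j = cc m (gc j).
Proof.
rewrite /colsum card_sum /cc big_mkord; apply: eq_bigr => i _.
by rewrite /gc inZ2_ord.
Qed.

Lemma Posz_sum (I : finType) (f : I -> nat) : Posz (\sum_(i : I) f i)%N = (\sum_(i : I) Posz (f i))%R.
Proof. by apply: (big_morph Posz PoszD). Qed.

Lemma dseq_sum (k : 'I_m) : dseq F k = (\sum_(j : 'I_n) x m (gc j) k)%R.
Proof.
rewrite /dseq /Defs.bseq /rowsum !card_sum !Posz_sum -sumrB.
apply: eq_bigr => j _; rewrite /x colsum_cc /gc inZ2_ord.
by [].
Qed.

Lemma hb_sum : hboundary F = (\sum_(j : 'I_n) bd m (gc j))%N.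
Proof.
rewrite /hboundary big_mkcond /=.
rewrite /bd [RHS]exchange_big pair_big /=.
apply: eq_bigr => [[i j]] _ /=.
rewrite /gc inZ2_ord.
case: ((i, j) \in F) => //=.
rewrite !mul1n; congr (_ + _)%N.
  case: (nat_of_ord i) => [|i'] /=; first by rewrite inZ2_neg.
  by rewrite -addn1 PoszD addrK.
by rewrite -addn1 PoszD.
Qed.

End Main.
End Helpers.
Import Helpers.

Theorem theorem3p1 (m n : nat) (F : {set 'I_m * 'I_n})
  (Hm : (1 <= m)%N) (Hn : (1 <= n)%N)
  (Hr1 : forall i : 'I_m, nat_of_ord i = 0%N -> rowsum F i = n)
  (Hrm : forall i : 'I_m, nat_of_ord i = m.-1 -> rowsum F i = 0%N)
  (t : nat) (s : 'I_(2 * t).+1 -> 'I_m)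
  (Hs : forall a b : 'I_(2 * t).+1, (a < b)%N -> (s a < s b)%N) :
  ((Posz (2 * n)) + (\sum_(k < 2 * t) (-1) ^+ k * dseq F (s (widen_ord (leqnSn _) k)))
     + 2 * dseq F (s ord_max) <= (Posz (hboundary F)))%R
  /\
  ((Posz (2 * n)) - 2 * dseq F (s ord0)
     + (\sum_(k < 2 * t) (-1) ^+ k * dseq F (s (lift ord0 k))) <= (Posz (hboundary F)))%R.
Proof.
pose s' := fun k => nat_of_ord (s (inord k)).
have Hs' : forall k, (k < 2 * t)%N -> (s' k < s' k.+1)%N.
  move=> k kt; apply: Hs; rewrite !inordK //; by rewrite ltnS // ltnW.
have sm : (s' (2 * t) <= m)%N by apply: ltnW; exact: ltn_ord.
have E1 : forall k : 'I_(2 * t), s (widen_ord (leqnSn _) k) = s (inord k).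
  by move=> k; congr s; apply: val_inj; rewrite /= inordK // ltnS ltnW.
have E2 : (ord_max : 'I_(2 * t).+1) = inord (2 * t) by apply: val_inj; rewrite /= inordK.
have E3 : (ord0 : 'I_(2 * t).+1) = inord 0 by apply: val_inj; rewrite /= inordK.
have E4 : forall k : 'I_(2 * t), lift ord0 k = inord k.+1.
  by move=> k; apply: val_inj; rewrite /= inordK // ltnS.
have g0 : forall j, gc F j 0.
  move=> j; have := Hr1 (Ordinal Hm) erefl; rewrite /rowsum => hc.
  have : [set j0 | (Ordinal Hm, j0) \in F] =i [set: 'I_n].
    by apply/subset_cardP; [rewrite cardsT card_ord | exact: subsetT].
  move/(_ j); rewrite !inE /= => h.
  by rewrite /gc (inZ2_ord F (Ordinal Hm) j) h.
have gout : forall j i, (m <= i)%N -> gc F j i = false by move=> j i; apply: gc_out.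
have E0 : Posz (2 * n) = (\sum_(j : 'I_n) Posz 2)%R.
  by rewrite -Posz_sum sum_nat_const card_ord mulnC.
split.
  have -> : (\sum_(k < 2 * t) (-1) ^+ k * dseq F (s (widen_ord (leqnSn _) k)) =
     \sum_(j : 'I_n) \sum_(k < 2 * t) (-1) ^+ k * x m (gc F j) (s' k))%R.
    rewrite exchange_big; apply: eq_bigr => k _; rewrite E1 dseq_sum mulr_sumr.
    by [].
  rewrite E2 dseq_sum mulr_sumr E0 -!big_split hb_sum Posz_sum /=.
  apply: ler_sum => j _; exact: (col1 (g0 j) (gout j) Hs' sm).
have -> : (\sum_(k < 2 * t) (-1) ^+ k * dseq F (s (lift ord0 k)) =
   \sum_(j : 'I_n) \sum_(k < 2 * t) (-1) ^+ k * x m (gc F j) (s' k.+1))%R.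
  rewrite exchange_big; apply: eq_bigr => k _; rewrite E4 dseq_sum mulr_sumr.
  by [].
rewrite E3 dseq_sum mulr_sumr E0 -sumrN -!big_split hb_sum Posz_sum /=.
apply: ler_sum => j _; exact: (col2 (g0 j) (gout j) Hs' sm).
Qed.
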